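(* Let $\Sigma$ be a graded alphabet and $t\in T_\Sigma$. Then the subtree automaton $A_t$ of $t$ realizes the subtree series of $t$: $\mathbb{P}_{A_t}=\mathrm{SubTreeSeries}_t$.
   Context: A graded alphabet is a finite set $\Sigma=\bigcup_{k\in\mathbb{N}}\Sigma_k$; $T_\Sigma$ is the set of trees $f(t_1,\ldots,t_k)$ with $f\in\Sigma_k$. Weights are in the monoid $(\mathbb{N},+)$. A RWTA is $A=(\Sigma,Q,\nu,\delta)$ with $Q$ finite, $\nu:Q\to\mathbb{N}$, $\delta\subseteq\bigcup_k Q\times\Sigma_k\times Q^k$; $\delta(f,q_1,\ldots,q_k)=\{q\mid(q,f,q_1,\ldots,q_k)\in\delta\}$, extended to subsets by union over tuples; $\nu(S)=\sum_{s\in S}\nu(s)$; $\Delta(f(t_1,\ldots,t_k))=\delta(f,\Delta(t_1),\ldots,\Delta(t_k))$; $\mathbb{P}_A(t)=\nu(\Delta(t))$. For $t=f(t_1,\ldots,t_k)$, $\mathrm{SubTree}(t)=\{t\}\cup\bigcup_j\mathrm{SubTree}(t_j)$, and $\mathrm{SubTreeSeries}_t:T_\Sigma\to\mathbb{N}$ is defined inductively by $\mathrm{SubTreeSeries}_t=t+\sum_{1\le j\le k}\mathrm{SubTreeSeries}_{t_j}$ (i.e. $\mathrm{SubTreeSeries}_t(s)$ is the number of nodes of $t$ at which the subtree rooted there equals $s$). The tree $t^\sharp$ is obtained from $t$ by indexing each symbol occurrence with its position in a prefix (preorder) traversal, so all indexed symbols are distinct and keep their arity; $\Sigma_{t^\sharp}$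 is the set of indexed symbols occurring in $t^\sharp$, and $\mathrm{h}$ erases indices ($\mathrm{h}(t^\sharp)=t$). The subtree automaton of $t$ is $A_t=(\Sigma,Q,\nu,\delta)$ with $Q=\mathrm{SubTree}(t^\sharp)$, $\nu(q)=1$ for all $q\in Q$, and for $f\in\Sigma_{t^\sharp}$ of arity $k$ and $t_1,\ldots,t_{k+1}\in Q$: $t_{k+1}\in\delta(\mathrm{h}(f),t_1,\ldots,t_k)$ iff $t_{k+1}=f(t_1,\ldots,t_k)$. *)

(* Defs.v *)
From HB Require Import structures.
From mathcomp Require Import all_boot.
Set Implicit Arguments. Unset Strict Implicit. Unset Printing Implicit Defensive.

Inductive tree (S : Type) : Type := Node of S & seq (tree S).
Arguments Node {S}.

Section TreeCount.
Variable T : countType.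

Fixpoint tree_enc (t : tree T) : GenTree.tree T :=
  match t with Node x ts => GenTree.Node 0 (GenTree.Leaf x :: map tree_enc ts) end.

Fixpoint tree_dec (g : GenTree.tree T) : option (tree T) :=
  match g with
  | GenTree.Node _ (GenTree.Leaf x :: cs) => Some (Node x (pmap tree_dec cs))
  | _ => None
  end.

Lemma tree_encK : pcancel tree_enc tree_dec.
Proof.
rewrite /pcancel; fix IH 1; case=> x ts /=; congr (Some (Node x _)).
elim: ts => //= u us IHus; rewrite IH /= IHus //.
Qed.
End TreeCount.

HB.instance Definition _ (T : countType) := Countable.copy (tree T) (pcan_type (@tree_encK T)).

Definition root (S : Type) (t : tree S) : S := let: Node x _ := t in x.

(* Graded alphabet: finite Sigma with arity function ar. T_Sigma = wf trees. *)
Fixpoint wf (Sigma : Type) (ar : Sigma -> nat) (t : tree Sigma) : bool :=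
  match t with Node f ts => (size ts == ar f) && all (wf ar) ts end.

Record rwta (Sigma : Type) := RWTA {
  state : finType;
  nu : state -> nat;
  (* delta q f [q1;...;qk] <-> (q, f, q1, ..., qk) \in delta *)
  delta : state -> Sigma -> seq state -> bool }.

Definition deltaS (Sigma : Type) (A : rwta Sigma) (f : Sigma)
  (Ss : seq {set state A}) : {set state A} :=
  [set q | [exists qs : (size Ss).-tuple (state A),
             all2 (fun (qi : state A) (Si : {set state A}) => qi \in Si) qs Ss && @delta Sigma A q f qs]].

Fixpoint Delta (Sigma : Type) (A : rwta Sigma) (t : tree Sigma) : {set state A} :=
  match t with Node f ts => @deltaS Sigma A f (map (@Delta Sigma A) ts) end.

Definition nuS (Sigma : Type) (A : rwta Sigma) (S : {set state A}) : nat :=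
  \sum_(q in S) @nu Sigma A q.

Definition realized (Sigma : Type) (A : rwta Sigma) (t : tree Sigma) : nat :=
  @nuS Sigma A (@Delta Sigma A t).

Fixpoint subtrees (S : Type) (t : tree S) : seq (tree S) :=
  match t with Node _ ts => t :: flatten (map (@subtrees S) ts) end.

Fixpoint SubTreeSeries (S : countType) (t : tree S) (s : tree S) : nat :=
  match t with Node _ ts => (t == s) + sumn (map (fun u => SubTreeSeries u s) ts) end.

(* t# : each symbol indexed by its position in a preorder traversal (from 0) *)
Fixpoint sharp_aux (S : Type) (n : nat) (t : tree S) : tree (S * nat) * nat :=
  match t with
  | Node f ts =>
    let fix go (m : nat) (us : seq (tree S)) : seq (tree (S * nat)) * nat :=
      match us with
      | [::] => ([::], m)
      | u :: us' => let (u', m1) := sharp_aux m u in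
                    let (us'', m2) := go m1 us' in (u' :: us'', m2)
      end in
    let (ts', m) := go n.+1 ts in (Node (f, n) ts', m)
  end.

Definition sharp (S : Type) (t : tree S) : tree (S * nat) := (sharp_aux 0 t).1.

Fixpoint h (S : Type) (t : tree (S * nat)) : tree S :=
  match t with Node f ts => Node f.1 (map (@h S) ts) end.

Definition symbols (S : Type) (t : tree S) : seq S := map (@root S) (subtrees t).

Definition subtree_aut (Sigma : finType) (ar : Sigma -> nat) (t : tree Sigma)
  : rwta Sigma :=
  let Q := seq_sub (subtrees (sharp t)) in
  @RWTA Sigma Q (fun _ => 1)
    (fun (q : Q) (g : Sigma) (qs : seq Q) =>
       let f := root (val q) in
       [&& f \in symbols (sharp t), f.1 == g, size qs == ar f.1
         & val q == Node f (map val qs)]).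

(* Main.v *)
Require Import Defs.
From HB Require Import structures.
From mathcomp Require Import all_boot.
From mathcomp Require Import zify.
Set Implicit Arguments.

Lemma tree_ind2 (S : countType) (P : tree S -> Prop) :
  (forall f ts, (forall u, u \in ts -> P u) -> P (Node f ts)) -> forall t, P t.
Proof.
move=> H; fix IH 1; case=> f ts; apply: H.
have: (fix F (l : seq (tree S)) : Prop := if l is u :: l' then P u /\ F l' else True) ts.
  elim: ts => [|u us Hus] /=; [exact: I | split; [exact: IH u | exact: Hus]].
clear IH; elim: ts => //= u us IHus [Pu Pus] v; rewrite inE.
by case: eqP => [->|_ /IHus] //; apply.
Qed.

Fixpoint go {S : Type} (m : nat) (us : seq (tree S)) : seq (tree (S * nat)) * nat :=
  match us with
  | [::] => ([::], m)
  | u :: us' => let (u', m1) := sharp_aux m u in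
                let (us'', m2) := go m1 us' in (u' :: us'', m2)
  end.

Lemma sharp_auxE (S : Type) n f (ts : seq (tree S)) :
  sharp_aux n (Node f ts) = let (ts', m) := go n.+1 ts in (Node (f, n) ts', m).
Proof.
have goE : forall m, go m ts =
  (fix go0 (m : nat) (us : list (tree S)) {struct us} :
            list (tree (S * nat)) * nat :=
          match us with
          | nil => (nil, m)
          | (u :: us')%list =>
              let (u', m1) := sharp_aux m u in
              let (us'', m2) := go0 m1 us' in ((u' :: us'')%list, m2)
          end) m ts.
  by elim: ts => //= u us IH m; case: (sharp_aux m u) => u' m1; rewrite IH.
by rewrite goE.
Qed.

Definition lab (S : Type) (x : tree (S * nat)) := (Defs.root x).2.

Lemma sharp_inv (S : countType) (t : tree S) : forall n,
  h (sharp_aux n t).1 = t /\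
  map (@lab S) (subtrees (sharp_aux n t).1) = iota n ((sharp_aux n t).2 - n) /\
  n < (sharp_aux n t).2.
Proof.
elim/tree_ind2: t => f ts IH n; rewrite sharp_auxE.
have: forall m, let r := go m ts in
  map (@h S) r.1 = ts /\
  flatten (map (fun u => map (@lab S) (subtrees u)) r.1) = iota m (r.2 - m) /\ m <= r.2.
  elim: ts IH => [|u us IHus] IH m /=; first by rewrite subnn.
  have [Hu1 [Hu2 Hu3]] := IH u (mem_head _ _) m.
  case E1: (sharp_aux m u) => [u' m1]; rewrite E1 /= in Hu1 Hu2 Hu3.
  have [Hs1 [Hs2 Hs3]] := IHus (fun v hv => IH v (@mem_behead _ (u :: us) _ hv)) m1.
  case E2: (go m1 us) => [us'' m2]; rewrite E2 /= in Hs1 Hs2 Hs3.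
  rewrite /= Hu1 Hs1 Hu2 Hs2; split => //; split; last by apply: leq_trans (ltnW Hu3) Hs3.
  have -> : m2 - m = (m1 - m) + (m2 - m1) by lia.
  by rewrite iotaD; congr (_ ++ iota _ _); lia.
move=> /(_ n.+1) /=; case: (go n.+1 ts) => [ts' m] /= [H1 [H2 H3]].
rewrite H1; split => //; split.
  have -> : [seq lab i | i <- flatten [seq subtrees i | i <- ts']] = iota n.+1 (m - n.+1).
    by rewrite map_flatten -map_comp -H2.
  by case: m H3 {H2} => // m H3; rewrite subSS subSn.
by [].
Qed.

Lemma subtrees_h (S : countType) (u : tree (S * nat)) :
  map (@h S) (subtrees u) = subtrees (h u).
Proof.
elim/tree_ind2: u => f ts IH /=; congr (_ :: _).
rewrite map_flatten -!map_comp; congr flatten; apply/eq_in_map => v hv /=.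
exact: IH.
Qed.

Lemma sts_count (S : countType) (t s : tree S) :
  SubTreeSeries t s = count (pred1 s) (subtrees t).
Proof.
elim/tree_ind2: t => f ts IH /=; rewrite eq_sym; congr (_ + _).
rewrite count_flatten -map_comp; congr sumn; apply/eq_in_map => v hv /=.
exact: IH.
Qed.

Lemma sharp_uniq (S : countType) (t : tree S) : uniq (subtrees (sharp t)).
Proof.
have [_ [H _]] := @sharp_inv S t 0.
apply: (@map_uniq _ _ (@lab S)); rewrite /sharp H; exact: iota_uniq.
Qed.

Lemma h_sharp (S : countType) (t : tree S) : h (sharp t) = t.
Proof. by have [H _] := @sharp_inv S t 0. Qed.

Lemma subtrees_trans (S : countType) (u : tree S) :
  forall v, v \in subtrees u -> {subset subtrees v <= subtrees u}.
Proof.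
elim/tree_ind2: u => f ts IH v /=; rewrite inE => /orP[/eqP -> //|].
move=> /flattenP [l /mapP [c hc ->] hv] x hx.
have := IH c hc v hv x hx => hxc.
rewrite inE; apply/orP; right; apply/flattenP; exists (subtrees c) => //.
exact: map_f.
Qed.

Lemma child_sub (S : countType) f (cs : seq (tree S)) c :
  c \in cs -> c \in subtrees (Node f cs).
Proof.
move=> hc /=; rewrite inE; apply/orP; right; apply/flattenP.
exists (subtrees c); first exact: map_f.
by case: c {hc} => ? ? /=; rewrite mem_head.
Qed.

Theorem lemma6 (Sigma : finType) (ar : Sigma -> nat) (t : tree Sigma) :
  wf ar t ->
  forall s : tree Sigma, wf ar s ->
    realized (subtree_aut ar t) s = SubTreeSeries t s.
Proof.
move=> _ s0.
set A := subtree_aut ar t.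
pose Q := seq_sub (subtrees (sharp t)).
have all2_eq : forall (qs : seq Q) (ss : seq (tree Sigma)),
    all2 (fun (qi : Q) (Si : {set Q}) => qi \in Si) qs
      (map (fun u => [set q : Q | h (val q) == u]) ss)
    = (map (fun q : Q => h (val q)) qs == ss).
  by elim=> [|q qs IH] [|u ss] //=; rewrite inE IH eqseq_cons.
have key : forall s, wf ar s -> Delta A s = [set q : Q | h (val q) == s].
  elim/tree_ind2 => g ss IH /= /andP [/eqP Hsz Hwf].
  have E : map (@Delta _ A) ss = map (fun u => [set q : Q | h (val q) == u]) ss.
    apply/eq_in_map => u hu; exact: IH hu (allP Hwf u hu).
  rewrite E; apply/setP => q; rewrite /deltaS !inE.
  apply/existsP/eqP.
    case=> qs /andP [Hall Hd].
    move: Hall; rewrite (all2_eq (tval qs) ss) => /eqP Hall.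
    move: Hd => /= /and4P [_ /eqP Hg _ /eqP Hq].
    rewrite Hq /= Hg; congr Node; rewrite -map_comp; exact: Hall.
  move=> Hq.
  have qin : val q \in subtrees (sharp t) := valP q.
  have [f [cs Eq]] : exists f cs, val q = Node f cs.
    by case: (val q) => f cs; exists f, cs.
  rewrite Eq in qin.
  have : h (Node f cs) = Node g ss by rewrite -Eq.
  case=> Hf Hcs.
  have sub : forall c, c \in cs -> c \in subtrees (sharp t).
    move=> c hc; have hc' := @child_sub _ f cs c hc; have := @subtrees_trans _ _ _ qin c hc'; exact.
  pose qs := [seq insubd q c | c <- cs] : seq Q.
  have Hqs : map val qs = cs.
    rewrite -[RHS]map_id -map_comp; apply/eq_in_map => c hc /=.
    by rewrite insubdK // sub.
  clearbody qs.
  have Hsz' : size qs == size (map (fun u => [set q : Q | h (val q) == u]) ss).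
    by rewrite size_map -Hcs -Hqs !size_map.
  exists (Tuple Hsz'); apply/andP; split.
    rewrite (all2_eq qs ss); apply/eqP; by rewrite -Hcs -Hqs -map_comp.
  have Eq' : ssval q = Node f cs := Eq.
  have Hsq : size qs = ar g by rewrite -Hsz -Hcs -Hqs !size_map.
  rewrite /= Eq' /= Hf Hqs Hsq !eqxx /= andbT.
  exact: (map_f (@Defs.root _) qin).
move=> Hs0; rewrite /realized key // /nuS sum1_card.
have Henum : map val (enum {: seq_sub (subtrees (sharp t))}) = subtrees (sharp t).
  by rewrite enumT unlock val_seq_sub_enum // sharp_uniq.
rewrite sts_count.
have -> : subtrees t = map (@h _) (subtrees (sharp t)) by rewrite subtrees_h h_sharp.
rewrite count_map cardsE cardE size_filter.
transitivity (count (preim (@h _) (pred1 s0)) (map val (enum {: seq_sub (subtrees (sharp t))}))).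
  rewrite count_map.
  by rewrite enumT; apply: eq_count => q.
by rewrite Henum.
Qed.
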